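(* If a second-order ODE $x_2=F(t,x,x_1)$ is invariant under a telescopic vector field $\tau^{(2)}=\alpha\partial_t+\beta\partial_x+\gamma^{(1)}\partial_{x_1}+\gamma^{(2)}\partial_{x_2}$, then $\mathbf{X}=\partial_x$ is a $\lambda$-symmetry of the equation for the function $\lambda=\lambda(t,x,x_1)$ given by $$\lambda=\frac{\gamma^{(1)}-\alpha F}{\beta-\alpha x_1}.$$
   Context: Jet coordinates $(t,x,x_1,x_2)$, $x_i=d^ix/dt^i$; $D_t$ the total derivative. A telescopic vector field of order 2 is $\tau^{(2)}=\alpha\partial_t+\beta\partial_x+\gamma^{(1)}\partial_{x_1}+\gamma^{(2)}\partial_{x_2}$ with $\alpha,\beta,\gamma^{(1)}$ smooth functions of $(t,x,x_1)$, $\beta-\alpha x_1\neq0$, and $\gamma^{(2)}=D_t(\gamma^{(1)})-D_t(\alpha)x_2+\frac{\gamma^{(1)}+x_1D_t\alpha-D_t\beta}{\beta-x_1\alpha}(\gamma^{(1)}-\alpha x_2)$; invariance means $\tau^{(2)}$ is tangent to $\{x_2=F\}$. For $\lambda=\lambda(t,x,x_1)$ and $\mathbf{X}=\rho(t,x)\partial_t+\phi^0(t,x)\partial_x$, $\mathbf{X}^{[\lambda,(2)]}=\rho\partial_t+\phi^0\partial_x+\phi^{[\lambda,(1)]}\partial_{x_1}+\phi^{[\lambda,(2)]}\partial_{x_2}$ with $\phi^{[\lambda,(0)]}=\phi^0$, $\phi^{[\lambda,(i)]}=D_t(\phi^{[\lambda,(i-1)]})-D_t(\rho)x_i+\lambda(\phi^{[\lambda,(i-1)]}-\rho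 x_i)$; $\mathbf{X}$ is a $\lambda$-symmetry of $x_2=F$ if $\mathbf{X}^{[\lambda,(2)]}$ is tangent to $\{x_2=F\}$. *)

(* Defs.v *)
From Stdlib Require Import Reals ClassicalEpsilon.
Open Scope R_scope.

(* Functions of the jet variables (t, x, x1). *)
Definition fn3 := R -> R -> R -> R.
Definition fn4 := R -> R -> R -> R -> R.

Definition deriv (g : R -> R) (s : R) : R :=
  epsilon (inhabits 0) (fun l => derivable_pt_lim g s l).

Definition pt  (f : fn3) : fn3 := fun t x y => deriv (fun s => f s x y) t.
Definition px  (f : fn3) : fn3 := fun t x y => deriv (fun s => f t s y) x.
Definition px1 (f : fn3) : fn3 := fun t x y => deriv (fun s => f t x s) y.

Definition has_partials (f : fn3) : Prop :=
  forall t x y,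
    (exists l, derivable_pt_lim (fun s => f s x y) t l) /\
    (exists l, derivable_pt_lim (fun s => f t s y) x l) /\
    (exists l, derivable_pt_lim (fun s => f t x s) y l).

(* Smooth (C^infinity) on R^3: all iterated partial derivatives of all orders exist. *)
Definition smooth3 (f : fn3) : Prop :=
  exists S : fn3 -> Prop, S f /\
    forall g, S g -> has_partials g /\ S (pt g) /\ S (px g) /\ S (px1 g).

Definition Dt (g : fn3) : fn4 :=
  fun t x x1 x2 => pt g t x x1 + x1 * px g t x x1 + x2 * px1 g t x x1.

Definition Dt0 (g : R -> R -> R) : fn3 :=
  fun t x x1 => pt (fun t x _ => g t x) t x x1 + x1 * px (fun t x _ => g t x) t x x1.

Definition lift3 (f : fn3) : fn4 := fun t x x1 _ => f t x x1.
Definition lift2 (f : R -> R -> R) : fn4 := fun t x _ _ => f t x.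

(* The vector field a d_t + b d_x + c1 d_{x1} + c2 d_{x2} is tangent to the
   submanifold {x2 = F(t,x,x1)}, i.e. it annihilates x2 - F on that submanifold. *)
Definition tangent_to_eq (F : fn3) (a b c1 c2 : fn4) : Prop :=
  forall t x x1,
    c2 t x x1 (F t x x1) =
      a t x x1 (F t x x1) * pt F t x x1 + b t x x1 (F t x x1) * px F t x x1
      + c1 t x x1 (F t x x1) * px1 F t x x1.

Definition telescopic_gamma2 (alpha beta gamma1 : fn3) : fn4 :=
  fun t x x1 x2 =>
    Dt gamma1 t x x1 x2 - Dt alpha t x x1 x2 * x2
    + (gamma1 t x x1 + x1 * Dt alpha t x x1 x2 - Dt beta t x x1 x2)
        / (beta t x x1 - x1 * alpha t x x1)
      * (gamma1 t x x1 - alpha t x x1 * x2).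

Definition telescopic_invariant (F alpha beta gamma1 : fn3) : Prop :=
  tangent_to_eq F (lift3 alpha) (lift3 beta) (lift3 gamma1)
    (telescopic_gamma2 alpha beta gamma1).

Definition lam_phi1 (lam : fn3) (rho phi0 : R -> R -> R) : fn3 :=
  fun t x x1 =>
    Dt0 phi0 t x x1 - Dt0 rho t x x1 * x1 + lam t x x1 * (phi0 t x - rho t x * x1).

Definition lam_phi2 (lam : fn3) (rho phi0 : R -> R -> R) : fn4 :=
  fun t x x1 x2 =>
    Dt (lam_phi1 lam rho phi0) t x x1 x2 - Dt0 rho t x x1 * x2
    + lam t x x1 * (lam_phi1 lam rho phi0 t x x1 - rho t x * x2).

Definition lambda_symmetry (F lam : fn3) (rho phi0 : R -> R -> R) : Prop :=
  tangent_to_eq F (lift2 rho) (lift2 phi0) (lift3 (lam_phi1 lam rho phi0))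
    (lam_phi2 lam rho phi0).

(* Main.v *)
Require Import Defs.
From Stdlib Require Import Reals Lra ClassicalEpsilon FunctionalExtensionality.
Open Scope R_scope.

Lemma deriv_eq g s l : derivable_pt_lim g s l -> deriv g s = l.
Proof.
  intros H. unfold deriv.
  assert (Hs := epsilon_spec (inhabits 0) (fun l => derivable_pt_lim g s l)
                 (ex_intro _ l H)).
  eapply uniqueness_limite; eauto.
Qed.

Lemma dquot (G A Fu B C : R -> R) s gG gA gF gB gC :
  derivable_pt_lim G s gG -> derivable_pt_lim A s gA -> derivable_pt_lim Fu s gF ->
  derivable_pt_lim B s gB -> derivable_pt_lim C s gC ->
  B s - A s * C s <> 0 ->
  derivable_pt_lim (fun u => (G u - A u * Fu u) / (B u - A u * C u)) s
   (((gG - (gA * Fu s + A s * gF)) * (B s - A s * C s)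
     - (gB - (gA * C s + A s * gC)) * (G s - A s * Fu s)) / (B s - A s * C s)^2).
Proof.
  intros HG HA HF HB HC Hn.
  assert (H := derivable_pt_lim_div (minus_fct G (mult_fct A Fu))
      (minus_fct B (mult_fct A C)) s _ _
      (derivable_pt_lim_minus _ _ _ _ _ HG (derivable_pt_lim_mult _ _ _ _ _ HA HF))
      (derivable_pt_lim_minus _ _ _ _ _ HB (derivable_pt_lim_mult _ _ _ _ _ HA HC)) Hn).
  unfold div_fct, minus_fct, mult_fct, Rsqr in H.
  replace ((B s - A s * C s)^2) with ((B s - A s * C s) * (B s - A s * C s)) by ring.
  exact H.
Qed.

Lemma sm_pt f t x y : smooth3 f -> derivable_pt_lim (fun s => f s x y) t (pt f t x y).
Proof.
  intros [S [Sf HS]]. destruct (HS f Sf) as [Hp _].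
  destruct (Hp t x y) as [[l Hl] _].
  unfold pt. rewrite (deriv_eq _ _ _ Hl). exact Hl.
Qed.
Lemma sm_px f t x y : smooth3 f -> derivable_pt_lim (fun s => f t s y) x (px f t x y).
Proof.
  intros [S [Sf HS]]. destruct (HS f Sf) as [Hp _].
  destruct (Hp t x y) as [_ [[l Hl] _]].
  unfold px. rewrite (deriv_eq _ _ _ Hl). exact Hl.
Qed.
Lemma sm_px1 f t x y : smooth3 f -> derivable_pt_lim (fun s => f t x s) y (px1 f t x y).
Proof.
  intros [S [Sf HS]]. destruct (HS f Sf) as [Hp _].
  destruct (Hp t x y) as [_ [_ [l Hl]]].
  unfold px1. rewrite (deriv_eq _ _ _ Hl). exact Hl.
Qed.

Lemma deriv_const c s : deriv (fun _ => c) s = 0.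
Proof. apply deriv_eq. apply derivable_pt_lim_const. Qed.

Theorem corollary2p6 (F alpha beta gamma1 : fn3) :
  smooth3 F -> smooth3 alpha -> smooth3 beta -> smooth3 gamma1 ->
  (forall t x x1, beta t x x1 - alpha t x x1 * x1 <> 0) ->
  telescopic_invariant F alpha beta gamma1 ->
  lambda_symmetry F
    (fun t x x1 => (gamma1 t x x1 - alpha t x x1 * F t x x1)
                   / (beta t x x1 - alpha t x x1 * x1))
    (fun _ _ => 0) (fun _ _ => 1).
Proof.
  intros sF sa sb sg Hn Hinv.
  set (lam := fun t x x1 => (gamma1 t x x1 - alpha t x x1 * F t x x1)
                   / (beta t x x1 - alpha t x x1 * x1)).
  assert (D0 : forall c : R, Dt0 (fun _ _ => c) = fun _ _ _ => 0).
  { intros c. apply functional_extensionality; intro t.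
    apply functional_extensionality; intro x.
    apply functional_extensionality; intro x1.
    unfold Dt0, pt, px. rewrite !deriv_const. ring. }
  assert (E1 : lam_phi1 lam (fun _ _ => 0) (fun _ _ => 1) = lam).
  { unfold lam_phi1. rewrite !D0.
    apply functional_extensionality; intro t.
    apply functional_extensionality; intro x.
    apply functional_extensionality; intro x1. ring. }
  assert (Ept : forall t x y, pt lam t x y =
     ((pt gamma1 t x y - (pt alpha t x y * F t x y + alpha t x y * pt F t x y)) * (beta t x y - alpha t x y * y)
     - (pt beta t x y - (pt alpha t x y * y + alpha t x y * 0)) * (gamma1 t x y - alpha t x y * F t x y)) / (beta t x y - alpha t x y * y)^2).
  { intros t x y. unfold pt at 1, lam. apply deriv_eq.
    apply (dquot (fun s => gamma1 s x y) (fun s => alpha s x y) (fun s => F s x y)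
                 (fun s => beta s x y) (fun _ => y)); try apply sm_pt; auto.
    apply derivable_pt_lim_const. }
  assert (Epx : forall t x y, px lam t x y =
     ((px gamma1 t x y - (px alpha t x y * F t x y + alpha t x y * px F t x y)) * (beta t x y - alpha t x y * y)
     - (px beta t x y - (px alpha t x y * y + alpha t x y * 0)) * (gamma1 t x y - alpha t x y * F t x y)) / (beta t x y - alpha t x y * y)^2).
  { intros t x y. unfold px at 1, lam. apply deriv_eq.
    apply (dquot (fun s => gamma1 t s y) (fun s => alpha t s y) (fun s => F t s y)
                 (fun s => beta t s y) (fun _ => y)); try apply sm_px; auto.
    apply derivable_pt_lim_const. }
  assert (Epx1 : forall t x y, px1 lam t x y =
     ((px1 gamma1 t x y - (px1 alpha t x y * F t x y + alpha t x y * px1 F t x y)) * (beta t x y - alpha t x y * y)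
     - (px1 beta t x y - (px1 alpha t x y * y + alpha t x y * 1)) * (gamma1 t x y - alpha t x y * F t x y)) / (beta t x y - alpha t x y * y)^2).
  { intros t x y. unfold px1 at 1, lam. apply deriv_eq.
    apply (dquot (fun s => gamma1 t x s) (fun s => alpha t x s) (fun s => F t x s)
                 (fun s => beta t x s) (fun s => s)); try apply sm_px1; auto.
    apply derivable_pt_lim_id. }
  unfold lambda_symmetry, tangent_to_eq. fold lam.
  unfold lam_phi2. rewrite E1, D0.
  intros t x x1.
  unfold lift2, lift3, Dt. rewrite Ept, Epx, Epx1.
  specialize (Hinv t x x1). unfold telescopic_invariant, tangent_to_eq in Hinv.
  unfold telescopic_gamma2, lift3, Dt in Hinv.
  specialize (Hn t x x1).
  unfold lam.
  set (g := gamma1 t x x1) in *. set (a := alpha t x x1) in *.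
  set (b := beta t x x1) in *. set (f := F t x x1) in *.
  assert (Hn' : b - x1 * a <> 0) by (intro; apply Hn; lra).
  apply (Rmult_eq_reg_r (b - a * x1)); [| exact Hn].
  apply (Rmult_eq_reg_r (b - a * x1)); [| exact Hn].
  apply (f_equal (fun z => z * (b - x1 * a))) in Hinv.
  field_simplify in Hinv; [| exact Hn'].
  field_simplify; try exact Hn.
  lra.
Qed.
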